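(* For any $T,n,m\in\mathbb{N}_+$ there exist a constant $C(n)$ depending only on $n$, reals $\alpha_1,\dots,\alpha_m$ and $\beta_1,\dots,\beta_m>1$ such that, with $\phi(t;B)=\sum_{k=1}^m\alpha_k(t/B)^{-\beta_k}$, $$\max_{1\le B\le T}\ \sum_{t=1}^\infty\big|\mathbb{I}\{t=B\}-\phi(t;B)\big|\le\frac{C(n)T^{1.01(n+1)}}{m^n},$$ where the maximum is over integers $B$.
   Context: $\mathbb{I}\{\cdot\}$ denotes the indicator function. *)

(* Defs.v *)
From Stdlib Require Import Reals Lra Lia.
From Coquelicot Require Import Coquelicot.
Open Scope R_scope.

Definition phi (m : nat) (alpha beta : nat -> R) (t B : nat) : R :=
  sum_n_m (fun k => alpha k * Rpower (INR t / INR B) (- beta k)) 1 m.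

Definition ind_eq (t B : nat) : R := if Nat.eqb t B then 1 else 0.

(* the summand |I{t=B} - phi(t;B)|, series indexed by t = j+1, j >= 0 *)
Definition err_term (m : nat) (alpha beta : nat -> R) (B : nat) (j : nat) : R :=
  Rabs (ind_eq (S j) B - phi m alpha beta (S j) B).

(* Main.v *)
Require Import Defs.
From Stdlib Require Import Reals Lra Lia.
From Coquelicot Require Import Coquelicot.
Open Scope R_scope.

Fixpoint ps (c : nat -> R) (N : nat) (w : R) : R :=
  match N with O => c O | S N' => ps c N' w + c N * w ^ N end.

Definition IsPoly (N : nat) (f : R -> R) := exists c, forall w, f w = ps c N w.

Lemma ps_plus c d N w : ps c N w + ps d N w = ps (fun i => c i + d i) N w.
Proof. induction N; simpl; [ring|]. rewrite <- IHN. ring. Qed.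

Lemma ps_scal a c N w : a * ps c N w = ps (fun i => a * c i) N w.
Proof. induction N; simpl; [ring|]. rewrite <- IHN. ring. Qed.

Lemma ps_mono c N k w : ps c N w = ps (fun i => if Nat.leb i N then c i else 0) (N + k) w.
Proof.
  induction k.
  - rewrite Nat.add_0_r. clear. assert (H: forall M, (M <= N)%nat ->
      ps c M w = ps (fun i => if Nat.leb i N then c i else 0) M w).
    { induction M; intros HM; cbn [ps].
      - reflexivity.
      - rewrite IHM by lia. assert (E: Nat.leb (S M) N = true) by (apply Nat.leb_le; lia).
        rewrite E. reflexivity. }
    apply H; lia.
  - rewrite IHk. replace (N + S k)%nat with (S (N + k)) by lia. cbn [ps].
    assert (E: Nat.leb (S (N + k)) N = false) by (apply Nat.leb_gt; lia).
    rewrite E. ring.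
Qed.

Lemma ps_shift c N w : w * ps c N w = ps (fun i => match i with O => 0 | S j => c j end) (S N) w.
Proof.
  induction N; [simpl; ring|].
  change (ps c (S N) w) with (ps c N w + c (S N) * w ^ (S N)).
  change (ps (fun i => match i with O => 0 | S j => c j end) (S (S N)) w) with
   (ps (fun i => match i with O => 0 | S j => c j end) (S N) w + c (S N) * w ^ (S (S N))).
  rewrite <- IHN. simpl. ring.
Qed.

Lemma ps_split d M w : ps d (S M) w = d O + w * ps (fun i => d (S i)) M w.
Proof.
  induction M.
  - simpl. ring.
  - change (ps d (S (S M)) w) with (ps d (S M) w + d (S (S M)) * w ^ (S (S M))).
    rewrite IHM. simpl. ring.
Qed.

Lemma IsPoly_ext N f g : IsPoly N f -> (forall w, f w = g w) -> IsPoly N g.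
Proof. intros [c Hc] H. exists c. intros w. rewrite <- H. auto. Qed.

Lemma IsPoly_plus N f g : IsPoly N f -> IsPoly N g -> IsPoly N (fun w => f w + g w).
Proof. intros [c Hc] [d Hd]. exists (fun i => c i + d i). intros w. rewrite Hc, Hd. apply ps_plus. Qed.

Lemma IsPoly_mono N k f : IsPoly N f -> IsPoly (N + k) f.
Proof. intros [c Hc]. eexists. intros w. rewrite Hc. apply ps_mono. Qed.

Lemma IsPoly_mono' N M f : (N <= M)%nat -> IsPoly N f -> IsPoly M f.
Proof. intros H P. replace M with (N + (M - N))%nat by lia. apply IsPoly_mono; auto. Qed.

Lemma IsPoly_scal N a f : IsPoly N f -> IsPoly N (fun w => a * f w).
Proof. intros [c Hc]. eexists. intros w. rewrite Hc. apply ps_scal. Qed.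

Lemma IsPoly_const a : IsPoly 0 (fun _ => a).
Proof. exists (fun _ => a). reflexivity. Qed.

Lemma IsPoly_shift N f : IsPoly N f -> IsPoly (S N) (fun w => w * f w).
Proof. intros [c Hc]. eexists. intros w. rewrite Hc. apply ps_shift. Qed.

Lemma IsPoly_mul N M f g : IsPoly N f -> IsPoly M g -> IsPoly (N + M) (fun w => f w * g w).
Proof.
  intros Pf. revert g. induction M; intros g [d Hd].
  - rewrite Nat.add_0_r. apply IsPoly_ext with (fun w => d O * f w).
    + apply IsPoly_scal; auto.
    + intros w. rewrite Hd. simpl. ring.
  - assert (P1 : IsPoly M (fun w => ps (fun i => d (S i)) M w)) by (eexists; intros; reflexivity).
    specialize (IHM _ P1).
    apply IsPoly_ext with (fun w => d O * f w + w * (f w * ps (fun i => d (S i)) M w)).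
    + apply IsPoly_plus.
      * replace (N + S M)%nat with (N + S M)%nat by lia.
        apply IsPoly_mono. apply IsPoly_scal; auto.
      * replace (N + S M)%nat with (S (N + M)) by lia. apply IsPoly_shift; auto.
    + intros w. rewrite Hd, ps_split. ring.
Qed.

Lemma IsPoly_id : IsPoly 1 (fun w => w).
Proof. exists (fun i => match i with 1%nat => 1 | _ => 0 end). intros w. simpl. ring. Qed.

(* Chebyshev pair: (T_k, U_{k-1}) *)
Fixpoint cheb (k : nat) (x : R) : R * R :=
  match k with
  | O => (1, 0)
  | S k' => let (a, b) := cheb k' x in (x * a + (x * x - 1) * b, a + x * b)
  end.

Lemma cheb_S k x : cheb (S k) x = (x * fst (cheb k x) + (x*x-1) * snd (cheb k x), fst (cheb k x) + x * snd (cheb k x)).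
Proof. simpl. destruct (cheb k x); reflexivity. Qed.

Lemma cheb_pell k x : (fst (cheb k x))^2 - (x*x-1) * (snd (cheb k x))^2 = 1.
Proof. induction k; [simpl; ring|]. rewrite cheb_S. cbn [fst snd].
  set (a := fst (cheb k x)) in *. set (b := snd (cheb k x)) in *.
  transitivity ((a^2 - (x*x-1)*b^2) * (x*x - (x*x-1))); [ring|]. rewrite IHk. ring. Qed.

Lemma cheb_bound k x : -1 <= x <= 1 -> Rabs (fst (cheb k x)) <= 1.
Proof.
  intros H. pose proof (cheb_pell k x). set (a := fst (cheb k x)) in *. set (b := snd (cheb k x)) in *.
  assert (0 <= (1 - x*x) * b^2) by (apply Rmult_le_pos; [nra | apply pow2_ge_0]).
  assert (a * a <= 1) by nra.
  apply Rabs_le. nra.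
Qed.

Lemma cheb_lower k x s : 1 <= x -> 0 <= s -> s * s = x * x - 1 ->
  fst (cheb k x) + s * snd (cheb k x) = (x + s)^k /\ fst (cheb k x) - s * snd (cheb k x) = (x - s)^k.
Proof.
  intros Hx Hs Hss. induction k; [simpl; split; ring|].
  destruct IHk as [H1 H2]. rewrite cheb_S. cbn [fst snd].
  set (a := fst (cheb k x)) in *. set (b := snd (cheb k x)) in *.
  change ((x+s)^(S k)) with ((x+s)*(x+s)^k). change ((x-s)^(S k)) with ((x-s)*(x-s)^k). rewrite <- H1, <- H2. split.
  - transitivity ((a + s*b)*(x+s) + b*(x*x-1 - s*s)); [ring|]. rewrite Hss. ring.
  - transitivity ((a - s*b)*(x-s) + b*(x*x-1 - s*s)); [ring|]. rewrite Hss. ring.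
Qed.

Lemma cheb_lower2 k x s : 1 <= x -> 0 <= s -> s * s = x * x - 1 ->
  (x + s)^k / 2 <= fst (cheb k x).
Proof.
  intros Hx Hs Hss. destruct (cheb_lower k x s Hx Hs Hss) as [H1 H2].
  assert (0 <= (x - s)^k). { apply pow_le. nra. }
  lra.
Qed.

Lemma cheb_poly (X : R -> R) : IsPoly 2 X -> forall k,
  IsPoly (2*k) (fun w => fst (cheb k (X w))) /\
  IsPoly (2*k+2) (fun w => (X w * X w - 1) * snd (cheb k (X w))).
Proof.
  intros PX.
  assert (PX2 : IsPoly 4 (fun w => X w * X w - 1)).
  { apply IsPoly_ext with (fun w => X w * X w + (-1)).
    - apply IsPoly_plus. apply (IsPoly_mul 2 2); auto. apply (IsPoly_mono 0 4). apply IsPoly_const.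
    - intros; ring. }
  induction k.
  - split.
    + apply IsPoly_ext with (fun _ => 1). apply IsPoly_const. reflexivity.
    + apply IsPoly_ext with (fun _ => 0). apply (IsPoly_mono 0 2). apply IsPoly_const.
      intros; simpl; ring.
  - destruct IHk as [HT HW]. split.
    + apply IsPoly_ext with (fun w => X w * fst (cheb k (X w)) + (X w * X w - 1) * snd (cheb k (X w))).
      * apply IsPoly_plus.
        -- replace (2 * S k)%nat with (2 + 2 * k)%nat by lia. apply IsPoly_mul; auto.
        -- replace (2 * S k)%nat with (2 * k + 2)%nat by lia. auto.
      * intros w. rewrite cheb_S. reflexivity.
    + apply IsPoly_ext with (fun w => (X w * X w - 1) * fst (cheb k (X w)) + X w * ((X w * X w - 1) * snd (cheb k (X w)))).
      * apply IsPoly_plus.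
        -- replace (2 * S k + 2)%nat with (4 + 2 * k)%nat by lia. apply IsPoly_mul; auto.
        -- replace (2 * S k + 2)%nat with (2 + (2 * k + 2))%nat by lia. apply IsPoly_mul; auto.
      * intros w. rewrite cheb_S. simpl. ring.
Qed.

Lemma IsPoly_quad a b c : IsPoly 2 (fun w => a + b * w + c * w * w).
Proof. exists (fun i => match i with 0%nat => a | 1%nat => b | 2%nat => c | _ => 0 end). intros w. simpl. ring. Qed.

Lemma tele_sum N : sum_n (fun j => / (INR (S j) * INR (S (S j)))) N = 1 - / INR (S (S N)).
Proof.
  induction N.
  - rewrite sum_O. simpl. field.
  - rewrite sum_Sn, IHN. change (plus ?a ?b) with (a + b).
    rewrite !S_INR. match goal with |- ?a = ?b => change (@eq R a b) end. field.
    pose proof (pos_INR N). split; lra.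
Qed.

Lemma tele_series : is_series (fun j => / (INR (S j) * INR (S (S j)))) 1.
Proof.
  unfold is_series. change (is_lim_seq (sum_n (fun j => / (INR (S j) * INR (S (S j))))) (Finite 1)).
  apply is_lim_seq_ext with (fun N => 1 - / INR (S (S N))).
  { intros; rewrite tele_sum; reflexivity. }
  assert (H : is_lim_seq (fun N => / INR (N + 2)) (Rbar_inv p_infty)).
  { apply is_lim_seq_inv.
    - apply (is_lim_seq_incr_n INR 2). apply is_lim_seq_INR.
    - discriminate. }
  simpl in H.
  assert (H2 : is_lim_seq (fun N => 1 - / INR (S (S N))) (1 - 0)).
  { apply is_lim_seq_minus'. apply is_lim_seq_const.
    eapply is_lim_seq_ext; [|exact H]. intros n. cbv beta. rewrite Nat.add_comm. reflexivity. }
  replace (1 - 0) with 1 in H2 by ring. exact H2.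
Qed.

Lemma ind_sum B N : (1 <= B)%nat ->
  sum_n (fun j => if Nat.eqb (S j) B then 1 else 0) N = if Nat.leb B (S N) then 1 else 0.
Proof.
  intros HB. induction N.
  - rewrite sum_O. destruct (Nat.eqb_spec 1 B); destruct (Nat.leb_spec B 1); try reflexivity; lia.
  - rewrite sum_Sn, IHN. change (plus ?a ?b) with (a + b).
    destruct (Nat.eqb_spec (S (S N)) B); destruct (Nat.leb_spec B (S N));
    destruct (Nat.leb_spec B (S (S N))); try lia;
    match goal with |- ?a = ?b => change (@eq R a b) end; ring.
Qed.

Lemma ind_series B : (1 <= B)%nat -> is_series (fun j => if Nat.eqb (S j) B then 1 else 0) 1.
Proof.
  intros HB. unfold is_series.
  change (is_lim_seq (sum_n (fun j => if Nat.eqb (S j) B then 1 else 0)) (Finite 1)).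
  apply is_lim_seq_ext_loc with (fun _ => 1).
  - exists B. intros N HN. rewrite ind_sum by auto.
    destruct (Nat.leb_spec B (S N)); [reflexivity|lia].
  - apply is_lim_seq_const.
Qed.

Lemma exp_nat a i : exp (INR i * a) = exp a ^ i.
Proof.
  induction i. simpl. rewrite Rmult_0_l. apply exp_0.
  rewrite S_INR. replace ((INR i + 1) * a) with (INR i * a + a) by ring.
  rewrite exp_plus, IHi. simpl. ring.
Qed.

Lemma exp_le a b : a <= b -> exp a <= exp b.
Proof. intros [H|H]. left; apply exp_increasing; auto. subst; lra. Qed.

Lemma ln_le_sub z : 0 < z -> ln z <= z - 1.
Proof. intros Hz. pose proof (exp_ineq1_le (ln z)). rewrite exp_ln in H; lra. Qed.

Lemma ln_ge_sub z : 0 < z -> 1 - / z <= ln z.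
Proof.
  intros Hz. pose proof (ln_le_sub (/ z) (Rinv_0_lt_compat _ Hz)).
  rewrite ln_Rinv in H; lra.
Qed.

Lemma ln_nonneg x : 1 <= x -> 0 <= ln x.
Proof. intros H. rewrite <- ln_1. apply ln_le; lra. Qed.

Lemma bernoulli d q : 0 <= d -> 1 + INR q * d <= (1 + d) ^ q.
Proof.
  intros Hd. induction q. simpl. lra.
  rewrite S_INR. simpl. assert (0 <= INR q * d) by (apply Rmult_le_pos; auto using pos_INR). nra.
Qed.

Lemma log_bound (Tr : R) (N : nat) : 1 <= Tr -> (1 <= N)%nat ->
  (ln Tr + 1) ^ N <= (INR N + 1) ^ N * Tr.
Proof.
  intros HT HN. assert (HNr : 1 <= INR N) by (apply (le_INR 1); auto).
  set (u := ln Tr / INR N).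
  assert (Hu : 0 <= u) by (unfold u; apply Rdiv_le_0_compat; [apply ln_nonneg; auto|lra]).
  assert (E : ln Tr = INR N * u) by (unfold u; field; lra).
  assert (H1 : ln Tr + 1 <= (INR N + 1) * exp u).
  { pose proof (exp_ineq1_le u). rewrite E. nra. }
  assert (H2 : (ln Tr + 1) ^ N <= ((INR N + 1) * exp u) ^ N).
  { apply pow_incr. split; auto. pose proof (ln_nonneg Tr HT). lra. }
  rewrite Rpow_mult_distr, <- exp_nat, <- E, exp_ln in H2 by lra. exact H2.
Qed.

Section Gap.
Variables (T B t : nat).
Hypotheses (HB1 : (1 <= B)%nat) (HBT : (B <= T)%nat) (Ht : (1 <= t)%nat) (Hne : t <> B).

Let Tr := INR T.
Let g := / (ln Tr + 1).
Let dl := g / (Tr + 1) / 2.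
Let w := exp (g * (ln (INR B) - ln (INR t))).

Lemma gap_main : dl * dl <= (w - 1) * (w - 1) <= 4.
Proof.
  assert (HTr : 1 <= Tr) by (unfold Tr; apply (le_INR 1); lia).
  assert (HBr : 1 <= INR B) by (apply (le_INR 1); lia).
  assert (Htr : 1 <= INR t) by (apply (le_INR 1); lia).
  assert (HBT' : INR B <= Tr) by (unfold Tr; apply le_INR; lia).
  assert (HlnT : 0 <= ln Tr) by (apply ln_nonneg; auto).
  assert (Hg : 0 < g) by (unfold g; apply Rinv_0_lt_compat; lra).
  assert (Hg1 : g <= 1). { unfold g. rewrite <- Rinv_1. apply Rinv_le_contravar; lra. }
  assert (HglnT : g * ln Tr <= 1).
  { unfold g. apply (Rmult_le_reg_l (ln Tr + 1)); [lra|]. rewrite <- Rmult_assoc, Rinv_r by lra. lra. }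
  set (lam := ln (INR B) - ln (INR t)).
  assert (Hlam_up : lam <= ln Tr).
  { unfold lam. pose proof (ln_nonneg _ Htr). pose proof (ln_le (INR B) Tr ltac:(lra) HBT'). lra. }
  assert (Hw0 : 0 < w) by (unfold w; apply exp_pos).
  assert (Hw3 : w <= 3).
  { unfold w. fold lam. apply Rle_trans with (exp 1); [|apply exp_le_3]. apply exp_le.
    assert (g * lam <= g * ln Tr) by (apply Rmult_le_compat_l; lra). lra. }
  assert (Hlamdiv : lam = ln (INR B / INR t)) by (unfold lam; rewrite ln_div; lra).
  assert (Ha0 : 0 < g / (Tr + 1)) by (apply Rdiv_lt_0_compat; lra).
  assert (Ha01 : g / (Tr + 1) <= 1). { apply Rle_trans with g; auto. unfold Rdiv. 
    rewrite <- (Rmult_1_r g) at 2. apply Rmult_le_compat_l; [lra|]. rewrite <- Rinv_1. apply Rinv_le_contravar; lra. }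
  split; [|nra].
  destruct (Nat.lt_ge_cases t B) as [Hlt|Hge].
  -
    assert (HtB : INR t + 1 <= INR B) by (rewrite <- S_INR; apply le_INR; lia).
    assert (Hl1 : / Tr <= lam).
    { rewrite Hlamdiv. eapply Rle_trans; [|apply ln_ge_sub; apply Rdiv_lt_0_compat; lra].
      replace (1 - / (INR B / INR t)) with ((INR B - INR t) / INR B) by (field; lra).
      apply Rle_trans with (/ INR B). apply Rinv_le_contravar; lra.
      unfold Rdiv. rewrite <- (Rmult_1_l (/ INR B)) at 1. apply Rmult_le_compat_r.
      left; apply Rinv_0_lt_compat; lra. lra. }
    assert (Hw1 : 1 + g * lam <= w) by (unfold w; fold lam; apply exp_ineq1_le).
    assert (H2 : g / (Tr + 1) <= g * lam).
    { apply Rle_trans with (g * / Tr). unfold Rdiv. apply Rmult_le_compat_l; [lra|].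
      apply Rinv_le_contravar; lra. apply Rmult_le_compat_l; lra. }
    assert (dl <= w - 1) by (unfold dl; lra).
    assert (0 < dl) by (unfold dl; lra).
    nra.
  - assert (HtB : INR B + 1 <= INR t) by (rewrite <- S_INR; apply le_INR; lia).
    assert (Hl1 : lam <= - / (INR B + 1)).
    { rewrite Hlamdiv. eapply Rle_trans; [apply ln_le_sub; apply Rdiv_lt_0_compat; lra|].
      apply (Rmult_le_reg_r (INR t * (INR B + 1))). nra.
      replace ((INR B / INR t - 1) * (INR t * (INR B + 1))) with ((INR B - INR t) * (INR B + 1)) by (field; lra).
      replace (- / (INR B + 1) * (INR t * (INR B + 1))) with (- INR t) by (field; lra). nra. }
    set (a := - (g * lam)).
    assert (Ha : g / (Tr + 1) <= a).
    { unfold a. apply Rle_trans with (g * / (INR B + 1)).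
      unfold Rdiv. apply Rmult_le_compat_l; [lra|]. apply Rinv_le_contravar; lra.
      assert (g * lam <= g * (- / (INR B + 1))) by (apply Rmult_le_compat_l; lra). lra. }
    assert (Hwa : w * (1 + a) <= 1).
    { unfold w. fold lam. replace (g * lam) with (- a) by (unfold a; ring).
      pose proof (exp_ineq1_le a). pose proof (exp_pos a).
      replace 1 with (exp (-a) * exp a) at 2 by (rewrite <- exp_plus; replace (-a + a) with 0 by ring; apply exp_0).
      apply Rmult_le_compat_l; [left; apply exp_pos|lra]. }
    assert (1 - w >= dl).
    { unfold dl. set (a0 := g / (Tr + 1)) in *. assert (w <= 1 / (1 + a)) by (apply (Rmult_le_reg_r (1+a)); [lra|]; field_simplify; lra).
      assert (1 - w >= a / (1 + a)) by (replace (a / (1 + a)) with (1 - 1 / (1 + a)) by (field; lra); lra).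
      assert (a / (1 + a) >= a0 / 2). { apply Rle_ge. apply (Rmult_le_reg_r (1 + a)); [lra|]. field_simplify; [|lra]. nra. }
      lra. }
    assert (0 < dl) by (unfold dl; lra).
    nra.
Qed.
End Gap.

Lemma final_ineq (Tr L dl Qr M P C : R) (n N : nat) :
  1 <= Tr -> 1 <= L -> 0 < dl -> 0 < Qr -> 0 < M -> (1 <= n)%nat -> N = (3 * n)%nat ->
  M <= 8 * INR N * Qr -> 1 <= 4 * Tr * L * dl -> L ^ N <= (INR N + 1) ^ N * Tr ->
  C * P < M ^ n -> Tr ^ (n + 1) <= P ->
  C = 4 * (8 * INR N) ^ N * (4 * (INR N + 1)) ^ N ->
  4 * Tr ^ 2 / (Qr * dl) ^ N <= C * P / M ^ n.
Proof.
  intros HT HL Hd HQ HM Hn HN H1 H2 H3 H4 H5 HC.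
  assert (HNr : 0 <= INR N) by apply pos_INR.
  assert (HTp : forall k, 0 < Tr ^ k) by (intros; apply pow_lt; lra).
  assert (HP1 : 1 <= P) by (pose proof (pow_R1_Rle Tr (n+1) HT); lra).
  assert (HA : 8 * INR N * (Qr * dl) * (4 * Tr * L) >= M).
  { assert (0 <= 8 * INR N * Qr) by nra. nra. }
  assert (HK : M ^ N <= (8 * INR N) ^ N * (4 * (INR N + 1)) ^ N * Tr ^ (N + 1) * (Qr * dl) ^ N).
  { apply Rle_trans with ((8 * INR N * (Qr * dl) * (4 * Tr * L)) ^ N).
    - apply pow_incr; lra.
    - rewrite !Rpow_mult_distr. rewrite pow_add, pow_1.
      assert (HL' : (4 ^ N * (Tr ^ N * L ^ N)) <= 4 ^ N * (INR N + 1) ^ N * Tr ^ N * Tr).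
      { assert (0 < 4 ^ N * Tr ^ N) by (apply Rmult_lt_0_compat; [apply pow_lt; lra| auto]). nra. }
      assert (0 <= (8 ^ N * INR N ^ N) * (Qr ^ N * dl ^ N)).
      { apply Rmult_le_pos; apply Rmult_le_pos; apply pow_le; lra. }
      nra. }
  assert (HC1 : 1 <= C).
  { rewrite HC. assert (1 <= (8 * INR N)) by (assert (1 <= INR N) by (apply (le_INR 1); lia); lra).
    assert (1 <= (4 * (INR N + 1))) by lra.
    pose proof (pow_R1_Rle _ N H). pose proof (pow_R1_Rle _ N H0). nra. }
  assert (HMn : 0 < M ^ n) by (apply pow_lt; lra).
  assert (HQd : 0 < (Qr * dl) ^ N) by (apply pow_lt; nra).
  assert (HMN : M ^ N = M ^ n * (M ^ n * M ^ n)).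
  { rewrite HN. rewrite <- !pow_add. f_equal. lia. }
  assert (HTN : Tr ^ (N + 3) = Tr ^ (n + 1) * (Tr ^ (n + 1) * Tr ^ (n + 1)) / Tr ^ 0 ).
  { simpl. rewrite Rdiv_1_r. rewrite <- !pow_add. f_equal. lia. }
  assert (HMP : P * (M ^ n * M ^ n) >= Tr ^ (N + 3)).
  { rewrite HTN. simpl pow at 4. rewrite Rdiv_1_r.
    assert (P <= M ^ n) by nra.
    assert (Tr ^ (n+1) * Tr ^ (n+1) <= P * P) by (apply Rmult_le_compat; try lra; left; auto).
    assert (P * P <= M ^ n * M ^ n) by (apply Rmult_le_compat; lra).
    assert (0 < Tr ^ (n+1)) by auto. nra. }
  apply (Rmult_le_reg_r (M ^ n * (Qr * dl) ^ N)). nra.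
  replace (4 * Tr ^ 2 / (Qr * dl) ^ N * (M ^ n * (Qr * dl) ^ N)) with (4 * Tr ^ 2 * M ^ n) by (field; lra).
  replace (C * P / M ^ n * (M ^ n * (Qr * dl) ^ N)) with (C * P * (Qr * dl) ^ N) by (field; lra).
  assert (HCQ : 4 * M ^ N <= C * (Qr * dl) ^ N * Tr ^ (N + 1)) by (rewrite HC; nra).
  assert (HT2 : Tr ^ (N + 1) * Tr ^ 2 = Tr ^ (N + 3)) by (rewrite <- pow_add; f_equal; lia).
  apply (Rmult_le_reg_r (Tr ^ (N + 1))). auto.
  rewrite HMN in HCQ.
  assert (4 * Tr ^ 2 * M ^ n * Tr ^ (N + 1) = 4 * M ^ n * Tr ^ (N + 3)) by (rewrite <- HT2; ring).
  rewrite H.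
  apply Rle_trans with (4 * M ^ n * (P * (M ^ n * M ^ n))).
  - apply Rmult_le_compat_l; [lra|]. lra.
  - nra.
Qed.
Lemma sum_conv (c : nat -> R) y2 w m : (1 <= m)%nat ->
  sum_n_m (fun k => c (k-1)%nat * (y2 * w^(k-1))) 1 m = y2 * ps c (m-1) w.
Proof.
  intros Hm. destruct m as [|p]; [lia|]. clear Hm.
  induction p.
  - rewrite sum_n_n. simpl. match goal with |- ?a = ?b => change (@eq R a b) end. ring.
  - rewrite sum_n_Sm by lia. rewrite IHp. change (plus ?a ?b) with (a + b).
    replace (S (S p) - 1)%nat with (S p) by lia. replace (S p - 1)%nat with p by lia.
    change (ps c (S p) w) with (ps c p w + c (S p) * w ^ (S p)).
    match goal with |- ?a = ?b => change (@eq R a b) end. ring.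
Qed.

Lemma Rpower_split (t B : nat) g k : (1 <= t)%nat -> (1 <= B)%nat ->
  Rpower (INR t / INR B) (- (2 + g * INR k)) =
  exp (2 * (ln (INR B) - ln (INR t))) * exp (g * (ln (INR B) - ln (INR t))) ^ k.
Proof.
  intros Ht HB.
  assert (1 <= INR t) by (apply (le_INR 1); lia). assert (1 <= INR B) by (apply (le_INR 1); lia).
  unfold Rpower. rewrite ln_div by lra. rewrite <- exp_nat, <- exp_plus. f_equal. ring.
Qed.

Lemma y2_eq (t B : nat) : (1 <= t)%nat -> (1 <= B)%nat ->
  exp (2 * (ln (INR B) - ln (INR t))) = INR B * INR B / (INR t * INR t).
Proof.
  intros Ht HB.
  assert (1 <= INR t) by (apply (le_INR 1); lia). assert (1 <= INR B) by (apply (le_INR 1); lia).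
  replace (2 * (ln (INR B) - ln (INR t))) with (ln (INR B) + ln (INR B) + (- ln (INR t) + - ln (INR t))) by ring.
  rewrite !exp_plus, !exp_Ropp, !exp_ln by lra. field. lra.
Qed.

Lemma phi_eq m (c : nat -> R) a g t B : (1 <= m)%nat -> (1 <= t)%nat -> (1 <= B)%nat ->
  phi m (fun k => a * c (k-1)%nat) (fun k => 2 + g * INR (k-1)) t B =
  exp (2 * (ln (INR B) - ln (INR t))) * (a * ps c (m-1) (exp (g * (ln (INR B) - ln (INR t))))).
Proof.
  intros Hm Ht HB. unfold phi.
  rewrite (sum_n_m_ext _ (fun k => (fun i => a * c i) (k-1)%nat *
      (exp (2 * (ln (INR B) - ln (INR t))) * exp (g * (ln (INR B) - ln (INR t))) ^ (k-1)))).
  - rewrite (sum_conv (fun i => a * c i)) by auto. rewrite <- (ps_scal a c). reflexivity.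
  - intros k. rewrite Rpower_split by auto. reflexivity.
Qed.

Theorem lemmaF5 :
  forall n : nat, (1 <= n)%nat ->
  exists C : R,
  forall T m : nat, (1 <= T)%nat -> (1 <= m)%nat ->
  exists alpha beta : nat -> R,
    (forall k : nat, (1 <= k <= m)%nat -> 1 < beta k) /\
    (forall B : nat, (1 <= B <= T)%nat ->
       ex_series (err_term m alpha beta B) /\
       Series (err_term m alpha beta B)
         <= C * Rpower (INR T) (101 / 100 * (INR n + 1)) / (INR m ^ n)).
Proof.
  intros n Hn.
  set (N := (3 * n)%nat).
  exists (4 * (8 * INR N) ^ N * (4 * (INR N + 1)) ^ N).
  set (C := 4 * (8 * INR N) ^ N * (4 * (INR N + 1)) ^ N).
  intros T m HT Hm.
  set (P := Rpower (INR T) (101 / 100 * (INR n + 1))).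
  set (Tr := INR T).
  assert (HTr : 1 <= Tr) by (unfold Tr; apply (le_INR 1); lia).
  assert (HNr : 1 <= INR N) by (apply (le_INR 1); unfold N; lia).
  assert (HP : Tr ^ (n + 1) <= P).
  { unfold P. rewrite <- Rpower_pow by lra. apply Rle_Rpower; auto.
    rewrite plus_INR. simpl INR. pose proof (pos_INR n). lra. }
  assert (HP1 : 1 <= P) by (pose proof (pow_R1_Rle Tr (n+1) HTr); lra).
  assert (HC1 : (8 * INR N) ^ n <= C).
  { unfold C. assert (1 <= 8 * INR N) by lra. assert (1 <= 4 * (INR N + 1)) by lra.
    pose proof (Rle_pow _ n N H ltac:(unfold N; lia)).
    pose proof (pow_R1_Rle _ N H0). pose proof (pow_R1_Rle _ n H). nra. }
  assert (HMr : 1 <= INR m) by (apply (le_INR 1); lia).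
  assert (HMn : 0 < INR m ^ n) by (apply pow_lt; lra).
  destruct (Rle_lt_dec (INR m ^ n) (C * P)) as [HA | HB].
  -
    exists (fun _ => 0), (fun _ => 2). split; [intros; lra|].
    intros B HB.
    assert (E : forall j, err_term m (fun _ => 0) (fun _ => 2) B j = if Nat.eqb (S j) B then 1 else 0).
    { intros j. unfold err_term, phi, ind_eq.
      rewrite (sum_n_m_ext _ (fun _ => (@zero R_AbelianMonoid))) by (intros; apply Rmult_0_l).
      rewrite sum_n_m_const_zero. change (@zero R_AbelianMonoid) with 0.
      destruct (Nat.eqb (S j) B); rewrite Rminus_0_r; [apply Rabs_R1 | apply Rabs_R0]. }
    assert (HS : is_series (err_term m (fun _ => 0) (fun _ => 2) B) 1).
    { eapply is_series_ext; [intros j; symmetry; apply E|]. apply ind_series; lia. }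
    split; [eexists; exact HS|].
    rewrite (is_series_unique _ _ HS).
    apply (Rmult_le_reg_r (INR m ^ n)); auto. unfold Rdiv. rewrite Rmult_assoc, Rinv_l by lra. lra.
  -
    assert (HC0 : 0 <= C) by (pose proof (pow_le (8 * INR N) n ltac:(lra)); lra).
    assert (Hm8 : (8 * N < m)%nat).
    { destruct (Nat.lt_ge_cases (8*N) m) as [h|h]; auto. exfalso.
      assert (INR m <= 8 * INR N).
      { replace (8 * INR N) with (INR (8*N)) by (rewrite mult_INR; simpl; ring). apply le_INR; lia. }
      assert (INR m ^ n <= (8 * INR N) ^ n) by (apply pow_incr; lra). nra. }
    set (q := (m / (4 * N))%nat).
    assert (Hdm := Nat.div_mod m (4*N) ltac:(unfold N; lia)).
    assert (Hr := Nat.mod_upper_bound m (4*N) ltac:(unfold N; lia)).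
    fold q in Hdm.
    set (r := (m mod (4*N))%nat) in *.
    assert (Hq1 : (1 <= q)%nat) by nia.
    assert (Hq2 : (2 * (q * N) + 1 <= m)%nat) by nia.
    assert (Hq3 : (m <= 8 * N * q)%nat) by nia.
    assert (HlnT : 0 <= ln Tr) by (apply ln_nonneg; auto).
    set (g := / (ln Tr + 1)).
    assert (Hg : 0 < g) by (unfold g; apply Rinv_0_lt_compat; lra).
    assert (Hg1 : g <= 1). { unfold g. rewrite <- Rinv_1. apply Rinv_le_contravar; lra. }
    set (dl := g / (Tr + 1) / 2).
    assert (Hdl : 0 < dl) by (unfold dl; apply Rdiv_lt_0_compat; [apply Rdiv_lt_0_compat|]; lra).
    assert (Hdl1 : dl <= 1/4).
    { unfold dl. unfold Rdiv. assert (/(Tr+1) <= /2) by (apply Rinv_le_contravar; lra).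
      assert (0 < /(Tr+1)) by (apply Rinv_0_lt_compat; lra). nra. }
    set (X := fun w => ((4 + dl*dl) - 2*((w-1)*(w-1)))/(4 - dl*dl)).
    assert (PX : IsPoly 2 X).
    { apply IsPoly_ext with (fun w => (4 + dl*dl - 2)/(4-dl*dl) + 4/(4-dl*dl) * w + (-2)/(4-dl*dl) * w * w).
      apply IsPoly_quad. intros w. unfold X. field. nra. }
    destruct (cheb_poly X PX (q*N)) as [PT _].
    assert (PT' : IsPoly (m-1) (fun w => fst (cheb (q*N) (X w)))) by (apply IsPoly_mono' with (2*(q*N))%nat; [lia|auto]).
    destruct PT' as [c Hc].
    set (x0 := X 1).
    set (TD0 := fst (cheb (q*N) x0)).
    assert (Hx0 : x0 = (4 + dl*dl)/(4 - dl*dl)) by (unfold x0, X; field; nra).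
    set (e := 2*(dl*dl)/(4-dl*dl)).
    assert (He : x0 = 1 + e) by (rewrite Hx0; unfold e; field; nra).
    assert (He2 : e >= dl*dl/2).
    { unfold e, Rdiv. assert (/4 <= /(4-dl*dl)) by (apply Rinv_le_contravar; nra). nra. }
    assert (Hx01 : 1 <= x0) by nra.
    assert (Hs : dl*dl <= x0*x0 - 1) by nra.
    set (s := sqrt (x0*x0-1)).
    assert (Hs0 : 0 <= s) by apply sqrt_pos.
    assert (Hss : s * s = x0*x0-1) by (apply sqrt_sqrt; nra).
    assert (Hsd : dl <= s) by nra.
    assert (HTD : (x0 + s)^(q*N)/2 <= TD0) by (apply cheb_lower2; auto).
    assert (HTD2 : (INR q * dl)^N / 2 <= TD0).
    { eapply Rle_trans; [|exact HTD]. apply Rmult_le_compat_r; [lra|].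
      rewrite pow_mult. apply pow_incr. split. apply Rmult_le_pos; [apply pos_INR|lra].
      apply Rle_trans with (1 + INR q * dl). lra.
      apply Rle_trans with ((1 + dl)^q). apply bernoulli; lra. apply pow_incr; lra. }
    assert (HqN : 0 < (INR q * dl)^N).
    { apply pow_lt. apply Rmult_lt_0_compat; auto. apply (lt_INR 0); lia. }
    assert (HTD0 : 0 < TD0) by lra.
    exists (fun k => / TD0 * c (k-1)%nat), (fun k => 2 + g * INR (k-1)).
    split.
    { intros k _. pose proof (pos_INR (k-1)). assert (0 <= g * INR (k-1)) by (apply Rmult_le_pos; lra). lra. }
    intros B HB'.
    set (G := fun j => (2 * (INR B * INR B) / TD0) * / (INR (S j) * INR (S (S j)))).
    assert (Hbound : forall j, 0 <= err_term m (fun k => / TD0 * c (k-1)%nat) (fun k => 2 + g * INR (k-1)) B j <= G j).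
    { intros j.
      assert (HG0 : 0 <= G j).
      { unfold G. apply Rmult_le_pos. unfold Rdiv. apply Rmult_le_pos; [nra|left; apply Rinv_0_lt_compat; auto].
        left; apply Rinv_0_lt_compat. apply Rmult_lt_0_compat; apply (lt_INR 0); lia. }
      split; [apply Rabs_pos|].
      unfold err_term, ind_eq.
      rewrite phi_eq by lia. rewrite <- Hc.
      destruct (Nat.eqb_spec (S j) B) as [Et|Et].
      - rewrite Et. rewrite Rminus_eq_0, !Rmult_0_r, exp_0. change (X 1) with x0. fold TD0.
        rewrite Rinv_l by lra. rewrite Rmult_1_r, Rminus_eq_0, Rabs_R0. auto.
      - set (w := exp (g * (ln (INR B) - ln (INR (S j))))).
        assert (Hgap : dl*dl <= (w-1)*(w-1) <= 4) by exact (gap_main T B (S j) ltac:(lia) ltac:(lia) ltac:(lia) Et).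
        assert (HX : -1 <= X w <= 1).
        { unfold X. split.
          - apply (Rmult_le_reg_r (4 - dl*dl)); [nra|]. unfold Rdiv. rewrite Rmult_assoc, Rinv_l by nra. nra.
          - apply (Rmult_le_reg_r (4 - dl*dl)); [nra|]. unfold Rdiv. rewrite Rmult_assoc, Rinv_l by nra. nra. }
        pose proof (cheb_bound (q*N) (X w) HX) as HTb.
        rewrite y2_eq by lia.
        set (tv := fst (cheb (q * N) (X w))) in *.
        assert (Ht1 : 1 <= INR (S j)) by (apply (le_INR 1); lia).
        unfold G. rewrite (S_INR (S j)).
        rewrite Rminus_0_l, Rabs_Ropp, !Rabs_mult.
        rewrite (Rabs_pos_eq (INR B * INR B / (INR (S j) * INR (S j)))) by (apply Rdiv_le_0_compat; nra).
        rewrite (Rabs_pos_eq (/ TD0)) by (left; apply Rinv_0_lt_compat; auto).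
        assert (Hy : INR B * INR B / (INR (S j) * INR (S j)) <= 2 * (INR B * INR B) * / (INR (S j) * (INR (S j) + 1))).
        { unfold Rdiv. apply (Rmult_le_reg_r (INR (S j) * INR (S j) * (INR (S j) + 1))). nra.
          replace (INR B * INR B * / (INR (S j) * INR (S j)) * (INR (S j) * INR (S j) * (INR (S j) + 1)))
            with (INR B * INR B * (INR (S j) + 1)) by (field; lra).
          replace (2 * (INR B * INR B) * / (INR (S j) * (INR (S j) + 1)) * (INR (S j) * INR (S j) * (INR (S j) + 1)))
            with (2 * (INR B * INR B) * INR (S j)) by (field; lra). nra. }
        assert (0 < / TD0) by (apply Rinv_0_lt_compat; auto).
        assert (0 <= Rabs tv) by apply Rabs_pos.
        assert (0 <= INR B * INR B / (INR (S j) * INR (S j))) by (apply Rdiv_le_0_compat; nra).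
        set (Y := INR B * INR B / (INR (S j) * INR (S j))) in *.
        set (Z := / TD0) in *.
        assert (HYZ : Y * (Z * Rabs tv) <= Y * (Z * 1)).
        { apply Rmult_le_compat_l; [lra|]. apply Rmult_le_compat_l; lra. }
        eapply Rle_trans; [exact HYZ|].
        replace (2 * (INR B * INR B) / TD0 * / (INR (S j) * (INR (S j) + 1))) with (Z * (2 * (INR B * INR B) * / (INR (S j) * (INR (S j) + 1)))) by (unfold Z, Rdiv; ring).
        rewrite Rmult_1_r, Rmult_comm. apply Rmult_le_compat_l; lra. }
    assert (HG : is_series G (2 * (INR B * INR B) / TD0)).
    { pose proof (is_series_scal (2 * (INR B * INR B) / TD0) _ _ tele_series) as H.
      change (scal ?a ?b) with (a * b) in H. rewrite Rmult_1_r in H.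
      eapply is_series_ext; [|exact H]. intros j. reflexivity. }
    assert (HGe : ex_series G) by (eexists; exact HG).
    split.
    { apply (@ex_series_le R_AbsRing R_CompleteNormedModule) with G; auto. intros j. change norm with (@abs R_AbsRing). simpl. unfold abs; simpl.
      rewrite Rabs_pos_eq by apply (Hbound j). apply Hbound. }
    eapply Rle_trans. apply Series_le; [exact Hbound | exact HGe].
    rewrite (is_series_unique _ _ HG).
    assert (HBr : INR B <= Tr) by (unfold Tr; apply le_INR; lia).
    assert (HB1 : 1 <= INR B) by (apply (le_INR 1); lia).
    apply Rle_trans with (4 * Tr ^ 2 / (INR q * dl) ^ N).
    { apply Rle_trans with (2 * (INR B * INR B) / ((INR q * dl) ^ N / 2)).
      - unfold Rdiv. apply Rmult_le_compat_l; [nra|]. apply Rinv_le_contravar; lra.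
      - replace (2 * (INR B * INR B) / ((INR q * dl) ^ N / 2)) with (4 * (INR B * INR B) / (INR q * dl) ^ N) by (field; lra).
        unfold Rdiv. apply Rmult_le_compat_r; [left; apply Rinv_0_lt_compat; auto|]. simpl. nra. }
    apply (final_ineq Tr (ln Tr + 1) dl (INR q) (INR m) P C n N); auto; try lra.
    - apply (lt_INR 0); lia.
    - replace (8 * INR N * INR q) with (INR (8 * N * q)) by (rewrite !mult_INR; simpl; ring). apply le_INR; auto.
    - unfold dl, g. replace (4 * Tr * (ln Tr + 1) * (/ (ln Tr + 1) / (Tr + 1) / 2)) with (2 * Tr / (Tr + 1)) by (field; lra).
      apply (Rmult_le_reg_r (Tr + 1)); [lra|].
      unfold Rdiv. rewrite Rmult_assoc, Rinv_l by lra. lra.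
    - apply log_bound; auto. unfold N; lia.
Qed.
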